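(* Let $AB\Gamma$ be a (nondegenerate) triangle with interior angles $A$, $B$, $\Gamma$ at the vertices $A$, $B$, $\Gamma$ respectively. Let $\ell_1$ be the line perpendicular to $AB$ through $B$, $\ell_2$ the line perpendicular to $B\Gamma$ through $\Gamma$, and $\ell_3$ the line perpendicular to $\Gamma A$ through $A$. These three lines bound a triangle $A'B'\Gamma'$. If $E$ and $E'$ denote the areas of triangles $AB\Gamma$ and $A'B'\Gamma'$ respectively, then $$\frac{E'}{E} = (\cot A + \cot B + \cot \Gamma)^2 .$$ *)

(* Defs.v *)
From Stdlib Require Import Reals.
Open Scope R_scope.

Definition pt := (R * R)%type.

Definition vsub (P Q : pt) : pt := (fst P - fst Q, snd P - snd Q).
Definition dot (u v : pt) : R := fst u * fst v + snd u * snd v.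
Definition cross (u v : pt) : R := fst u * snd v - snd u * fst v.
Definition vnorm (u : pt) : R := sqrt (dot u u).

Definition nondegenerate (A B C : pt) : Prop := cross (vsub B A) (vsub C A) <> 0.

Definition tri_area (P Q S : pt) : R := Rabs (cross (vsub Q P) (vsub S P)) / 2.

Definition angle_at (P Q S : pt) : R :=
  acos (dot (vsub Q P) (vsub S P) / (vnorm (vsub Q P) * vnorm (vsub S P))).

Definition cot (x : R) : R := cos x / sin x.

Definition on_perp (P Q X : pt) : Prop := dot (vsub X Q) (vsub Q P) = 0.

(* Main.v *)
Require Import Defs.
From Stdlib Require Import Reals Lra Lia Psatz.
Open Scope R_scope.

Lemma cot_angle (u v : pt) : cross u v <> 0 ->
  cos (acos (dot u v / (vnorm u * vnorm v))) / sin (acos (dot u v / (vnorm u * vnorm v)))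
  = dot u v / Rabs (cross u v).
Proof.
  destruct u as [ux uy], v as [vx vy]; unfold vnorm, cross, dot; simpl; intro Hc.
  set (nu := sqrt (ux*ux+uy*uy)). set (nv := sqrt (vx*vx+vy*vy)).
  assert (Hu : 0 < ux*ux+uy*uy).
  { destruct (Req_dec ux 0); destruct (Req_dec uy 0); try nra. }
  assert (Hv : 0 < vx*vx+vy*vy).
  { destruct (Req_dec vx 0); destruct (Req_dec vy 0); try nra. }
  assert (Hnu : 0 < nu) by (apply sqrt_lt_R0; lra).
  assert (Hnv : 0 < nv) by (apply sqrt_lt_R0; lra).
  assert (Hnu2 : nu*nu = ux*ux+uy*uy) by (apply sqrt_sqrt; lra).
  assert (Hnv2 : nv*nv = vx*vx+vy*vy) by (apply sqrt_sqrt; lra).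
  set (d := ux*vx+uy*vy). set (c := ux*vy-uy*vx).
  assert (Hlag : d*d + c*c = (nu*nv)*(nu*nv)).
  { replace ((nu*nv)*(nu*nv)) with ((nu*nu)*(nv*nv)) by ring. rewrite Hnu2, Hnv2.
    unfold d, c; ring. }
  assert (Hp : 0 < nu*nv) by nra.
  set (x := d / (nu*nv)).
  assert (Hx2 : 1 - x*x = (Rabs c / (nu*nv))^2).
  { unfold x. replace ((Rabs c / (nu*nv))^2) with ((Rabs c)^2/((nu*nv)*(nu*nv))) by (field; lra).
    rewrite pow2_abs. apply Rmult_eq_reg_r with ((nu*nv)*(nu*nv)); [|nra].
    field_simplify; [nra|lra|lra]. }
  assert (Hc2 : 0 < c*c) by (apply Rsqr_pos_lt in Hc; unfold Rsqr in Hc; exact Hc).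
  assert (Hxb : x*x <= 1).
  { assert (0 <= (Rabs c / (nu*nv))^2) by (apply pow2_ge_0). nra. }
  assert (Hx1 : -1 <= x <= 1) by nra.
  rewrite (cos_acos x Hx1), (sin_acos x Hx1).
  replace (1 - x²) with ((Rabs c / (nu*nv))^2) by (rewrite <- Hx2; unfold Rsqr; ring).
  rewrite sqrt_pow2.
  2:{ apply Rmult_le_pos; [apply Rabs_pos| left; apply Rinv_0_lt_compat; lra]. }
  assert (Rabs c <> 0) by (apply Rabs_no_R0; exact Hc).
  unfold x; field; split; lra.
Qed.

Lemma solve2 (a1 b1 c1 a2 b2 c2 x y : R) :
  a1*x+b1*y=c1 -> a2*x+b2*y=c2 -> a1*b2-a2*b1 <> 0 ->
  x = (c1*b2-c2*b1)/(a1*b2-a2*b1) /\ y = (a1*c2-a2*c1)/(a1*b2-a2*b1).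
Proof.
  intros H1 H2 Hd; split.
  - apply Rmult_eq_reg_r with (a1*b2-a2*b1); [|exact Hd].
    unfold Rdiv; rewrite Rmult_assoc, Rinv_l; [|exact Hd].
    transitivity (b2*(a1*x+b1*y) - b1*(a2*x+b2*y)); [ring|]. rewrite H1, H2; ring.
  - apply Rmult_eq_reg_r with (a1*b2-a2*b1); [|exact Hd].
    unfold Rdiv; rewrite Rmult_assoc, Rinv_l; [|exact Hd].
    transitivity (a1*(a2*x+b2*y) - a2*(a1*x+b1*y)); [ring|]. rewrite H1, H2; ring.
Qed.

Theorem mainTheorem1 (A B G A' B' G' : pt) :
  nondegenerate A B G ->
  on_perp G A A' -> on_perp A B A' ->
  on_perp A B B' -> on_perp B G B' ->
  on_perp B G G' -> on_perp G A G' ->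
  tri_area A' B' G' / tri_area A B G =
    (cot (angle_at A B G) + cot (angle_at B G A) + cot (angle_at G A B)) ^ 2.
Proof.
  intros HD H1 H2 H3 H4 H5 H6.
  unfold cot, angle_at.
  assert (EB : cross (vsub G B) (vsub A B) = cross (vsub B A) (vsub G A))
    by (unfold cross, vsub; simpl; ring).
  assert (EG : cross (vsub A G) (vsub B G) = cross (vsub B A) (vsub G A))
    by (unfold cross, vsub; simpl; ring).
  unfold nondegenerate in HD.
  rewrite (cot_angle _ _ HD).
  rewrite (cot_angle (vsub G B) (vsub A B)) by (rewrite EB; exact HD).
  rewrite (cot_angle (vsub A G) (vsub B G)) by (rewrite EG; exact HD).
  rewrite EB, EG.
  destruct A as [ax ay], B as [bx by_], G as [gx gy], A' as [a'x a'y],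
    B' as [b'x b'y], G' as [g'x g'y].
  unfold on_perp, tri_area, cross, dot, vsub in *; simpl in *.
  set (D := (bx - ax) * (gy - ay) - (by_ - ay) * (gx - ax)) in *.
  destruct (solve2 (ax-gx) (ay-gy) (ax*(ax-gx)+ay*(ay-gy)) (bx-ax) (by_-ay)
     (bx*(bx-ax)+by_*(by_-ay)) a'x a'y) as [Ea1 Ea2]; try nra.
  destruct (solve2 (bx-ax) (by_-ay) (bx*(bx-ax)+by_*(by_-ay)) (gx-bx) (gy-by_)
     (gx*(gx-bx)+gy*(gy-by_)) b'x b'y) as [Eb1 Eb2]; try nra.
  destruct (solve2 (gx-bx) (gy-by_) (gx*(gx-bx)+gy*(gy-by_)) (ax-gx) (ay-gy)
     (ax*(ax-gx)+ay*(ay-gy)) g'x g'y) as [Eg1 Eg2]; try nra.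
  subst a'x a'y b'x b'y g'x g'y.
  set (S := (bx - ax) * (gx - ax) + (by_ - ay) * (gy - ay) +
            ((gx - bx) * (ax - bx) + (gy - by_) * (ay - by_)) +
            ((ax - gx) * (bx - gx) + (ay - gy) * (by_ - gy))).
  match goal with |- Rabs ?e / 2 / _ = _ => assert (Ee : e = S*S/D) end.
  { unfold S, D in *. field. repeat split; intro Hz; apply HD; lra. }
  rewrite Ee.
  pose proof (eq_refl S) as HSdef. unfold S at 2 in HSdef. clearbody S D.
  assert (HS : 0 <= S*S) by exact (Rle_0_sqr S).
  destruct (Rcase_abs D) as [Hn|Hp].
  - assert (/D < 0) by (apply Rinv_lt_0_compat; lra).
    rewrite (Rabs_left D Hn). rewrite Rabs_left1 by (unfold Rdiv; clear - HS H; nra).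
    rewrite HSdef. field; lra.
  - assert (Hp' : 0 < D) by lra. assert (0 < /D) by (apply Rinv_0_lt_compat; lra).
    rewrite (Rabs_right D Hp). rewrite Rabs_right by (unfold Rdiv; clear - HS H; nra).
    rewrite HSdef. field; lra.
Qed.
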